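(* Let $M=\Gamma\backslash\mathbf{H}^3$ be a non-compact hyperbolic $3$-manifold, $C$ the maximal representative of a cusp of $M$, and suppose (after conjugating $\Gamma$) that two tangent horoballs of the preimage of $C$ in $\mathbf{H}^3$ are centered at $0$ and $\infty$, denoted $B_0$ and $B_\infty=\{x_3>h\}$ with $h>0$. If $\gamma\in\Gamma$ is a loxodromic element with $\gamma(B_0)=B_\infty$, and $b=\gamma(\infty)\in\mathbf{C}$, then $$2\cosh(\ell_\gamma/2)\;\le\;\frac{\sqrt{4h^2+|b|^2}}{h},$$ where $\ell_\gamma$ is the translation length of $\gamma$.
   Context: Hyperbolic manifolds are complete, of constant curvature $-1$, of finite volume, possibly non-orientable; $\Gamma\subset\mathsf{Isom}(\mathbf{H}^3)$ is discrete torsion-free. We use the upper half-space model $\mathbf{H}^3=\{x_1+x_2i+x_3j:\ x_3>0\}$ with boundary $\mathbf{C}\cup\{\infty\}$. For $x\in\partial\mathbf{H}^3$, $\Gamma_x$ is its stabilizer in $\Gamma$. A cusp region is $\Gamma_x\backslash B$, with $B$ an open horoball centered at a parabolic fixed point $x$ such that no element of $\Gamma\setminus\Gamma_x$ identifies two points of $B$; a cusp is an equivalence class of cusp regions under ''one contains the other'', and its maximal representative is the union of its members. The preimage of the maximal representative in $\mathbf{H}^3$ is a $\Gamma$-invariant family of horoballs with disjoint interiors, some of which are tangent. *)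

(* Defs.v *)
From HB Require Import structures.
From mathcomp Require Import all_boot all_order all_algebra.
From mathcomp Require Import all_classical all_reals all_analysis.
Set Implicit Arguments. Unset Strict Implicit. Unset Printing Implicit Defensive.
Import Order.TTheory GRing.Theory Num.Theory.
Import numFieldNormedType.Exports.
Local Open Scope classical_set_scope.
Local Open Scope ring_scope.

Record H3 (R : realType) := mkH3 { hx : R; hy : R; hz : R; hz_gt0 : 0 < hz }.

(* boundary points: None = infinity, Some (c1,c2) = c1 + c2 i in C *)
Definition bdpt (R : realType) := option (R * R).

Definition cosh (R : realType) (x : R) : R := (expR x + expR (- x)) / 2.
Definition acosh (R : realType) (u : R) : R := ln (u + Num.sqrt (u ^+ 2 - 1)).

Definition esq (R : realType) (x y : H3 R) : R :=
  (hx x - hx y) ^+ 2 + (hy x - hy y) ^+ 2 + (hz x - hz y) ^+ 2.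
Definition hdist (R : realType) (x y : H3 R) : R :=
  acosh (1 + esq x y / (2 * hz x * hz y)).

Definition isometry (R : realType) (g : H3 R -> H3 R) : Prop :=
  bijective g /\ forall x y, hdist (g x) (g y) = hdist x y.

Definition ray (R : realType) (xi : bdpt R) (t : R) : H3 R :=
  match xi with
  | None => @mkH3 R 0 0 (expR t) (expR_gt0 t)
  | Some c => @mkH3 R c.1 c.2 (expR (- t)) (expR_gt0 (- t))
  end.

(* bd_ext g xi eta : the continuous extension of g to the boundary maps xi to
   eta, i.e. the image of a geodesic ray ending at xi converges to eta. *)
Definition bd_ext (R : realType) (g : H3 R -> H3 R) (xi eta : bdpt R) : Prop :=
  match eta with
  | None => (fun t => hx (g (ray xi t)) ^+ 2 + hy (g (ray xi t)) ^+ 2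
                      + hz (g (ray xi t)) ^+ 2) @ +oo --> +oo
  | Some c => [/\ (fun t => hx (g (ray xi t))) @ +oo --> c.1,
                  (fun t => hy (g (ray xi t))) @ +oo --> c.2 &
                  (fun t => hz (g (ray xi t))) @ +oo --> (0 : R)]
  end.

Definition fixes_bd (R : realType) (g : H3 R -> H3 R) (xi : bdpt R) : Prop :=
  bd_ext g xi xi.

Definition no_interior_fixpoint (R : realType) (g : H3 R -> H3 R) : Prop :=
  forall x, g x <> x.

Definition parabolic (R : realType) (g : H3 R -> H3 R) : Prop :=
  isometry g /\ no_interior_fixpoint g /\
  exists xi, fixes_bd g xi /\ forall eta, fixes_bd g eta -> eta = xi.

Definition loxodromic (R : realType) (g : H3 R -> H3 R) : Prop :=
  isometry g /\ no_interior_fixpoint g /\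
  exists xi eta, xi <> eta /\ fixes_bd g xi /\ fixes_bd g eta /\
    forall zeta, fixes_bd g zeta -> zeta = xi \/ zeta = eta.

Definition transl_length (R : realType) (g : H3 R -> H3 R) : R :=
  inf [set hdist x (g x) | x in [set: H3 R]].

Definition isom_group (R : realType) (G : set (H3 R -> H3 R)) : Prop :=
  [/\ (forall g, G g -> isometry g), G id,
      (forall g h, G g -> G h -> G (g \o h)) &
      (forall g, G g -> exists2 h, G h & cancel g h /\ cancel h g)].

(* discreteness, in the form of proper discontinuity of the action *)
Definition discrete_group (R : realType) (G : set (H3 R -> H3 R)) : Prop :=
  forall (x : H3 R) (r : R), finite_set [set g | G g /\ hdist x (g x) <= r].

Definition torsion_free (R : realType) (G : set (H3 R -> H3 R)) : Prop :=
  forall g, G g -> forall n : nat, (0 < n)%N -> iter n (fun h => g \o h) id = id -> g = id.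

(* hyperbolic volume measure dx1 dx2 dx3 / x3^3 *)
Definition emb (R : realType) (x : H3 R) : R * R * R := (hx x, hy x, hz x).
Definition leb3 (R : realType) :=
  ((@lebesgue_measure R \x @lebesgue_measure R) \x @lebesgue_measure R)%E.

(* the quotient G \ H^3 has finite volume: there is a measurable strict
   fundamental set of finite hyperbolic volume *)
Definition finite_covolume (R : realType) (G : set (H3 R -> H3 R)) : Prop :=
  exists F : set (H3 R),
    [/\ measurable (@emb R @` F),
        (forall x, exists2 g, G g & F (g x)),
        (forall y z g, F y -> F z -> G g -> g y = z -> y = z) &
        (\int[@leb3 R]_(p in @emb R @` F) ((p.2 ^+ 3)^-1)%:E < +oo)%E].

(* the quotient G \ H^3 is compact iff translates of some hyperbolic ball cover *)
Definition cocompact (R : realType) (G : set (H3 R -> H3 R)) : Prop :=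
  exists (x0 : H3 R) (r : R), forall y, exists2 g, G g & hdist x0 (g y) <= r.

(* open horoballs: at infinity {x3 > s}; at c in C the open Euclidean ball of
   diameter s tangent to C at c *)
Definition horoball (R : realType) (xi : bdpt R) (s : R) : set (H3 R) :=
  match xi with
  | None => [set x | s < hz x]
  | Some c => [set x | (hx x - c.1) ^+ 2 + (hy x - c.2) ^+ 2 + (hz x - s / 2) ^+ 2
                         < (s / 2) ^+ 2]
  end.

Definition is_horoball_at (R : realType) (B : set (H3 R)) (xi : bdpt R) : Prop :=
  exists2 s : R, 0 < s & B = horoball xi s.

Definition stabilizer (R : realType) (G : set (H3 R -> H3 R)) (xi : bdpt R) :=
  [set g | G g /\ fixes_bd g xi].

Definition parabolic_fixed_point (R : realType) (G : set (H3 R -> H3 R))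
  (xi : bdpt R) : Prop := exists2 g, G g & parabolic g /\ fixes_bd g xi.

(* B projects to a cusp region: no element of G \ G_xi identifies two points of B *)
Definition precisely_invariant (R : realType) (G : set (H3 R -> H3 R))
  (xi : bdpt R) (B : set (H3 R)) : Prop :=
  forall g, G g -> ~ fixes_bd g xi -> forall x y, B x -> B y -> g x <> y.

(* preimage in H^3 of the maximal representative of the cusp at xi: the union
   of all horoballs at xi giving cusp regions, and its G-translates *)
Definition max_cusp_ball (R : realType) (G : set (H3 R -> H3 R)) (xi : bdpt R)
  : set (H3 R) :=
  \bigcup_(B in [set B | is_horoball_at B xi /\ precisely_invariant G xi B]) B.

Definition cusp_horoballs (R : realType) (G : set (H3 R -> H3 R)) (xi : bdpt R)
  : set (set (H3 R)) :=
  [set g @` max_cusp_ball G xi | g in G].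

(* Main.v *)
Require Import Defs.
From HB Require Import structures.
From mathcomp Require Import all_boot all_order all_algebra.
From mathcomp Require Import all_classical all_reals all_analysis.
From mathcomp Require Import ring lra.
Import Order.TTheory GRing.Theory Num.Theory.
Import numFieldNormedType.Exports.
Local Open Scope classical_set_scope.
Local Open Scope ring_scope.


Lemma coshK {R : realType} (u : R) : 1 <= u -> cosh (acosh u) = u.
Proof.
move=> u1; rewrite /cosh /acosh.
have s0 : 0 <= u ^+ 2 - 1 by rewrite subr_ge0 -(expr1n _ 2) ler_pXn2r ?nnegrE //; lra.
set s := Num.sqrt _.
have ss : s ^+ 2 = u ^+ 2 - 1 by rewrite sqr_sqrtr.
have sp : 0 <= s by apply: sqrtr_ge0.
have vp : 0 < u + s by lra.
rewrite expRN lnK ?posrE //.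
have -> : (u + s)^-1 = u - s.
  apply: (mulfI (lt0r_neq0 vp)).
  rewrite mulfV ?lt0r_neq0 //. nra.
field; lra.
Qed.

Lemma acosh_ge0 {R : realType} (u : R) : 1 <= u -> 0 <= acosh u.
Proof.
move=> u1; rewrite /acosh; apply: ln_ge0.
have := sqrtr_ge0 (u ^+ 2 - 1); lra.
Qed.

Lemma cosh_le {R : realType} (x y : R) : 0 <= x -> x <= y -> cosh x <= cosh y.
Proof.
move=> x0 xy; rewrite /cosh !expRN.
have a1 : 1 <= expR x by rewrite -expR0 ler_expR.
have ab : expR x <= expR y by rewrite ler_expR.
set a := expR x in a1 ab *; set b := expR y in ab *.
rewrite ler_pM2r; last lra.
have ap : 0 < a by lra.
have bp : 0 < b by lra.
have -> : a + a^-1 = (a*a + 1) / a by field; lra.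
have -> : b + b^-1 = (b*b + 1) / b by field; lra.
rewrite ler_pdivrMr // mulrAC ler_pdivlMr //.
have h1 : 0 <= (b - a) * (a * b - 1) by apply: mulr_ge0; nra.
nra.
Qed.



Lemma alg1 {R : realType} (h zq u3 D : R) : 0 < h -> h < zq -> 0 < u3 -> u3 <= h -> 0 <= D ->
  2 * zq * h <= 4 * (zq - h) ^+ 2 -> 4 * (D + (zq - u3) ^+ 2) = 2 * zq * u3 ->
  [/\ zq = 2 * h, u3 = h & D = 0].
Proof.
move=> h0 hz u0 uh D0 e1 e2.
have z2 : 2 * h <= zq.
  have : 0 <= (2 * zq - h) * (zq - 2 * h) by nra.
  rewrite pmulr_rge0; [lra| lra].
have z3 : zq <= 2 * u3.
  have : (2 * zq - u3) * (zq - 2 * u3) <= 0 by nra.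
  rewrite pmulr_rle0; [lra| lra].
have -> : zq = 2 * h by lra.
have -> : u3 = h by lra.
split => //.
have eu : u3 = h by lra.
have ez : zq = 2 * h by lra.
rewrite eu ez in e2.
nra.
Qed.

Lemma alg2 {R : realType} (h v3 E w : R) : 0 < h -> 0 < v3 -> 0 < E -> 0 <= w ->
  (w + (v3 - h) ^+ 2) * E = (E - h) ^+ 2 * v3 ->
  (w + (v3 - 2 * h) ^+ 2) * E = (2 * E - h) ^+ 2 * v3 -> w = 0.
Proof.
move=> h0 v0 E0 w0 e1 e2.
have e3 : E * (3 * h ^+ 2) = E * (3 * E * v3) by nra.
have e4 : h ^+ 2 = E * v3.
  have := mulfI (lt0r_neq0 E0) e3; lra.
have : w * E * E = 0 by nra.
move/eqP; rewrite !mulf_eq0 (negbTE (lt0r_neq0 E0)) !orbF => /eqP //.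
Qed.



Lemma esq_ge0 {R : realType} (x y : H3 R) : 0 <= esq x y.
Proof. rewrite /esq; have := sqr_ge0 (hx x - hx y); have := sqr_ge0 (hy x - hy y);
 have := sqr_ge0 (hz x - hz y); lra. Qed.

Lemma Q_ge1 {R : realType} (x y : H3 R) : 1 <= 1 + esq x y / (2 * hz x * hz y).
Proof.
have := esq_ge0 x y; have := (hz_gt0 x); have := (hz_gt0 y) => a b c.
rewrite lerDl; apply: divr_ge0 => //; nra.
Qed.

Lemma hdist_ge0 {R : realType} (x y : H3 R) : 0 <= hdist x y.
Proof. exact: acosh_ge0 (Q_ge1 x y). Qed.

Lemma Qpres {R : realType} (g : H3 R -> H3 R)
  (Hi : forall x y, hdist (g x) (g y) = hdist x y) x y :
  esq (g x) (g y) * (hz x * hz y) = esq x y * (hz (g x) * hz (g y)).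
Proof.
have e := Hi x y; rewrite /hdist in e.
have := congr1 (@cosh R) e; rewrite !coshK ?Q_ge1 // => /addrI.
have := (hz_gt0 x); have := (hz_gt0 y); have := (hz_gt0 (g x)); have := (hz_gt0 (g y)).
move=> a b c d.
move/eqP; rewrite eqr_div; first last.
- by rewrite lt0r_neq0 // !mulr_gt0.
- by rewrite lt0r_neq0 // !mulr_gt0.
move/eqP => e2.
have e3 : 2 * (esq (g x) (g y) * (hz x * hz y)) = 2 * (esq x y * (hz (g x) * hz (g y))).
  by rewrite !mulrA; move: e2; rewrite !mulrA => e2; rewrite [2 * _]mulrC e2; ring.
by apply: (mulfI _ e3).
Qed.

Lemma final_bound {R : realType} (h B : R) : 0 < h -> 0 <= B ->
  2 * cosh (acosh (1 + B / (2 * h * h)) / 2) <= Num.sqrt (4 * h ^+ 2 + B) / h.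
Proof.
move=> h0 B0.
set U := 1 + _.
have U1 : 1 <= U by rewrite /U lerDl; apply: divr_ge0 => //; nra.
have cU := @coshK _ U U1.
set a := acosh U in cU *.
rewrite /cosh in cU *.
have ea : expR a = expR (a/2) * expR (a/2) by rewrite -expRD; congr expR; field.
rewrite !expRN ea invfM in cU.
set y := expR (a / 2) in cU ea *.
have y0 : 0 < y by apply: expR_gt0.
set z := y^-1 in cU *.
have yz : y * z = 1 by rewrite mulfV ?lt0r_neq0.
have z0 : 0 < z by rewrite invr_gt0.
set S := Num.sqrt _.
have S0 : 0 <= S by apply: sqrtr_ge0.
have SS : S ^+ 2 = 4 * h ^+ 2 + B by rewrite sqr_sqrtr //; nra.
have eq2 : (y + z) ^+ 2 * h ^+ 2 = S ^+ 2.
  rewrite SS.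
  have : (y * y + z * z) = 2 * U by rewrite -cU; field.
  rewrite /U => e.
  have -> : (y + z) ^+ 2 = y * y + z * z + 2 * (y * z) by ring.
  rewrite e yz; field; lra.
rewrite /cosh !expRN -/y -/z.
have -> : 2 * ((y + z) / 2) = y + z by field.
rewrite ler_pdivlMr //.
nra.
Qed.



Lemma sq0 {R : realType} (a b : R) : (a - b) ^+ 2 = 0 -> a = b.
Proof. by move/eqP; rewrite sqrf_eq0 subr_eq0 => /eqP. Qed.

Lemma Pbound {R : realType} (h : R) (hp : 0 < h / 2) (w : H3 R) : 0 < h ->
  ~ horoball (Some (0, 0)) h w -> h * hz w <= 4 * esq (mkH3 0 0 hp) w.
Proof.
move=> h0 /= /negP; rewrite -leNgt /esq /= !subr0 !sub0r !sqrrN => hw.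
have z0 := hz_gt0 w.
have a := sqr_ge0 (hx w); have b := sqr_ge0 (hy w).
case: (lerP (hz w) h) => hzh; nra.
Qed.

Lemma cst_lim {R : realType} (c d : R) : (fun t : R => c) @ +oo --> d -> c = d.
Proof.
move=> H.
have := cvg_unique _ H (cvg_cst c).
move=> e; symmetry; exact: e.
Qed.

Theorem lemma5 (R : realType) (G : set (H3 R -> H3 R))
  (HG : isom_group G) (Hdisc : discrete_group G) (Htf : torsion_free G)
  (Hvol : finite_covolume G) (Hnc : ~ cocompact G)
  (xi : bdpt R) (Hxi : parabolic_fixed_point G xi)
  (h : R) (h_gt0 : 0 < h)
  (Binf : cusp_horoballs G xi (horoball None h))
  (B0 : cusp_horoballs G xi (horoball (Some (0, 0)) h))
  (gamma : H3 R -> H3 R) (Hgamma : G gamma) (Hlox : loxodromic gamma)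
  (HgB : gamma @` horoball (Some (0, 0)) h = horoball None h)
  (b : R * R) (Hb : bd_ext gamma None (Some b)) :
  2 * cosh (transl_length gamma / 2)
    <= Num.sqrt (4 * h ^+ 2 + (b.1 ^+ 2 + b.2 ^+ 2)) / h.
Proof.
case: Hlox => [[Hbij Hi] _].
have HQ := @Qpres _ gamma Hi.
have hp : 0 < h / 2 by lra.
pose T := mkH3 0 0 h_gt0.
pose P := mkH3 0 0 hp.
have uout : ~ h < hz (gamma T).
  move=> H.
  have : horoball None h (gamma T) by [].
  rewrite -HgB => -[x Bx gx].
  have xT := bij_inj Hbij gx.
  move: Bx; rewrite xT /= !subr0.
  apply/negP; rewrite -leNgt; nra.
have qin : h < hz (gamma P).
  have : horoball None h (gamma P) by rewrite -HgB; exists P => //=; rewrite !subr0; nra.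
  by [].
pose W := mkH3 (hx (gamma P)) (hy (gamma P)) h_gt0.
have Wb : 2 * hz (gamma P) * h <= 4 * (hz (gamma P) - h) ^+ 2.
  case: Hbij => f gf fg.
  have eW : gamma (f W) = W by rewrite fg.
  have wout : ~ horoball (Some (0, 0)) h (f W).
    move=> Hw.
    have : horoball None h (gamma (f W)) by rewrite -HgB; exists (f W).
    by rewrite eW /=; lra.
  have pb := @Pbound _ h hp (f W) h_gt0 wout.
  have e := HQ P (f W).
  have eqW : esq (gamma P) W = (hz (gamma P) - h)^+2.
    by rewrite /esq /= !subrr expr0n /= !add0r.
  rewrite eW eqW in e.
  have zw := hz_gt0 (f W).
  have zq := hz_gt0 (gamma P).
  move: e pb; set X := esq _ _; set a := hz (f W); set z := hz (gamma P) => e pb.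
  rewrite /= in e.
  have key : (2 * z * h) * (h * a / 2) <= (4 * (z - h) ^+ 2) * (h * a / 2).
    have -> : (2 * z * h) * (h * a / 2) = (h * a) * (z * h) by field.
    have -> : (4 * (z - h) ^+ 2) * (h * a / 2) = (4 * X) * (z * h).
      by rewrite -[4 * X * _]mulrA -e; field.
    by apply: ler_wpM2r => //; apply/ltW/mulr_gt0.
  by move: key; rewrite ler_pM2r //; apply: divr_gt0 => //; apply: mulr_gt0.
have eT := HQ P T.
have zq := hz_gt0 (gamma P).
have zu := hz_gt0 (gamma T).
have hne : h != 0 by rewrite lt0r_neq0.
have [zq2 uh D0] : [/\ hz (gamma P) = 2 * h, hz (gamma T) = h &
    (hx (gamma P) - hx (gamma T)) ^+ 2 + (hy (gamma P) - hy (gamma T)) ^+ 2 = 0].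
  apply: alg1 => //.
  - by rewrite leNgt; apply/negP; exact: uout.
  - by apply: addr_ge0; apply: sqr_ge0.
  - apply: (mulIf (mulf_neq0 hne hne)).
    transitivity (8 * (esq (gamma P) (gamma T) * (hz P * hz T))); first by rewrite /esq /=; field.
    by rewrite eT /esq /=; field.
have qx : hx (gamma P) = hx (gamma T).
  apply: sq0; have := sqr_ge0 (hx (gamma P) - hx (gamma T)); have := sqr_ge0 (hy (gamma P) - hy (gamma T)); lra.
have qy : hy (gamma P) = hy (gamma T).
  apply: sq0; have := sqr_ge0 (hx (gamma P) - hx (gamma T)); have := sqr_ge0 (hy (gamma P) - hy (gamma T)); lra.
have hv : forall t, hx (gamma (ray None t)) = hx (gamma T) /\ hy (gamma (ray None t)) = hy (gamma T).
  move=> t.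
  have e1 := HQ (ray None t) T.
  have e2 := HQ (ray None t) P.
  have E0 : 0 < expR t := expR_gt0 t.
  have v0 := hz_gt0 (gamma (ray None t)).
  set v := gamma (ray None t) in e1 e2 v0 *.
  set w := (hx v - hx (gamma T)) ^+ 2 + (hy v - hy (gamma T)) ^+ 2.
  have w0 : w = 0.
    apply: (@alg2 _ h (hz v) (expR t)) => //.
    - by apply: addr_ge0; apply: sqr_ge0.
    - apply: (mulIf hne).
      transitivity (esq v (gamma T) * (hz (ray None t) * hz T)).
        by rewrite /esq /= uh /w; ring.
      by rewrite e1 /esq /= uh; ring.
    - have hne2 : h / 2 != 0 by rewrite lt0r_neq0.
      apply: (mulIf hne2).
      transitivity (esq v (gamma P) * (hz (ray None t) * hz P)).
        by rewrite /esq /= zq2 qx qy /w; field.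
      by rewrite e2 /esq /= zq2; field.
  split; apply: sq0; move: w0; rewrite /w;
    have := sqr_ge0 (hx v - hx (gamma T)); have := sqr_ge0 (hy v - hy (gamma T)); lra.
case: Hb => H1 H2 _.
have ef1 : (fun t => hx (gamma (ray None t))) = fun=> hx (gamma T).
  by apply/funext => t; case: (hv t).
have ef2 : (fun t => hy (gamma (ray None t))) = fun=> hy (gamma T).
  by apply/funext => t; case: (hv t).
rewrite ef1 in H1; rewrite ef2 in H2.
have b1 : hx (gamma T) = b.1 by exact: (@cst_lim _ _ _ H1).
have b2 : hy (gamma T) = b.2 by exact: (@cst_lim _ _ _ H2).
have Hinf : transl_length gamma <= hdist T (gamma T).
  rewrite /transl_length.
  have : has_lbound [set hdist x (gamma x) | x in [set: H3 R]].
    by exists 0 => y [x _ <-]; apply: hdist_ge0.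
  move/ge_inf; apply; by exists T.
have L0 : 0 <= transl_length gamma.
  rewrite /transl_length; apply: lb_le_inf; first by exists (hdist T (gamma T)), T.
  by move=> y [x _ <-]; apply: hdist_ge0.
apply: (le_trans (y := 2 * cosh (hdist T (gamma T) / 2))).
  rewrite ler_pM2l //; apply: cosh_le; lra.
have -> : hdist T (gamma T) = acosh (1 + (b.1 ^+ 2 + b.2 ^+ 2) / (2 * h * h)).
  rewrite /hdist /esq /= uh -b1 -b2; congr acosh; congr (1 + _); rewrite subrr expr0n /=; ring.
apply: final_bound => //.
by apply: addr_ge0; apply: sqr_ge0.
Qed.
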